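(* Let $p$ be one of $(123,\{0\},\{0\})$, $(123,\{0\},\{0,2\})$, $(132,\{0\},\{0\})$, $(132,\{0\},\{0,2\})$, or any pattern in the same symmetry class as one of these. Then for all $n\ge1$, $a_n(p)=n!-(n-1)!+1$.
   Context: For $n\ge1$, $\mathcal S_n$ is the set of permutations $\pi=\pi_1\cdots\pi_n$ of $[n]$. A bi-vincular pattern of length $k$ is a triple $p=(\sigma,X,Y)$ with $\sigma\in\mathcal S_k$ and $X,Y\subseteq\{0,1,\dots,k\}$. A permutation $\pi\in\mathcal S_n$ contains $p$ if there are indices $1\le i_1<\dots<i_k\le n$ such that $(\pi_{i_1},\dots,\pi_{i_k})$ is order-isomorphic to $\sigma$ and, letting $j_1<\dots<j_k$ be the values $\pi_{i_1},\dots,\pi_{i_k}$ sorted increasingly and setting $i_0=j_0=0$, $i_{k+1}=j_{k+1}=n+1$, one has $i_{x+1}=i_x+1$ for all $x\in X$ and $j_{y+1}=j_y+1$ for all $y\in Y$. Otherwise $\pi$ avoids $p$; $a_n(p)$ is the number of $\pi\in\mathcal S_n$ avoiding $p$. Symmetries: $p^{i}=(\sigma^{-1},Y,X)$, $p^{r}=(\sigma^{r},\{k-x:x\in X\},Y)$, $p^{c}=(\sigma^{c},X,\{k-y:y\in Y\})$ with $\sigma^r_j=\sigma_{k+1-j}$, $\sigma^c_j=k+1-\sigma_j$; the symmetry class of $p$ consists of all patterns obtained from $p$ by finitely many applications of these maps. *)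

(* Defs.v *)
From mathcomp Require Import all_boot all_fingroup.
Set Implicit Arguments. Unset Strict Implicit. Unset Printing Implicit Defensive.

(* Permutations act on 0-based 'I_k; pattern value sigma_j (1-based)
   corresponds to (sigma (j-1)) + 1. *)
Record bvpat := BVPat {
  bv_k : nat;
  bv_sigma : 'S_bv_k;
  bv_X : {set 'I_bv_k.+1};
  bv_Y : {set 'I_bv_k.+1} }.

Definition idx_seq (n k : nat) (f : {ffun 'I_k -> 'I_n}) : seq nat :=
  0 :: [seq (f a).+1 | a <- enum 'I_k] ++ [:: n.+1].

Definition val_seq (n k : nat) (pi : 'S_n) (f : {ffun 'I_k -> 'I_n}) : seq nat :=
  0 :: sort leq [seq (pi (f a)).+1 | a <- enum 'I_k] ++ [:: n.+1].

Definition contains (n : nat) (pi : 'S_n) (p : bvpat) : bool :=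
  let k := bv_k p in
  [exists f : {ffun 'I_k -> 'I_n},
    [&& [forall a : 'I_k, forall b : 'I_k, (a < b) ==> (f a < f b)],
        [forall a : 'I_k, forall b : 'I_k,
           (pi (f a) < pi (f b)) == (bv_sigma p a < bv_sigma p b)],
        [forall x in bv_X p,
           nth 0 (idx_seq f) x.+1 == (nth 0 (idx_seq f) x).+1] &
        [forall y in bv_Y p,
           nth 0 (val_seq pi f) y.+1 == (nth 0 (val_seq pi f) y).+1]]].

Definition avoid_count (p : bvpat) (n : nat) : nat :=
  #|[set pi : 'S_n | ~~ contains pi p]|.

Definition rev_perm (k : nat) : 'S_k := perm (@rev_ord_inj k).

Definition pat_inv (p : bvpat) : bvpat :=
  @BVPat (bv_k p) (bv_sigma p)^-1 (bv_Y p) (bv_X p).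

(* p^r = (sigma^r, {k - x : x in X}, Y), sigma^r_j = sigma_{k+1-j} *)
Definition pat_rev (p : bvpat) : bvpat :=
  @BVPat (bv_k p) (rev_perm (bv_k p) * bv_sigma p)
         [set rev_ord x | x in bv_X p] (bv_Y p).

(* p^c = (sigma^c, X, {k - y : y in Y}), sigma^c_j = k+1-sigma_j *)
Definition pat_comp (p : bvpat) : bvpat :=
  @BVPat (bv_k p) (bv_sigma p * rev_perm (bv_k p))
         (bv_X p) [set rev_ord y | y in bv_Y p].

Inductive in_sym_class (p : bvpat) : bvpat -> Prop :=
  | sc_refl : in_sym_class p p
  | sc_inv q : in_sym_class p q -> in_sym_class p (pat_inv q)
  | sc_rev q : in_sym_class p q -> in_sym_class p (pat_rev q)
  | sc_comp q : in_sym_class p q -> in_sym_class p (pat_comp q).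

Definition perm123 : 'S_3 := 1%g.
Definition perm132 : 'S_3 := tperm (inord 1) (inord 2).
Definition set0_4 : {set 'I_4} := [set (inord 0 : 'I_4)].
Definition set02_4 : {set 'I_4} := [set (inord 0 : 'I_4); (inord 2 : 'I_4)].

Definition p1 := @BVPat 3 perm123 set0_4 set0_4.
Definition p2 := @BVPat 3 perm123 set0_4 set02_4.
Definition p3 := @BVPat 3 perm132 set0_4 set0_4.
Definition p4 := @BVPat 3 perm132 set0_4 set02_4.

(* Main.v *)
Require Import Defs.
From mathcomp Require Import all_boot all_fingroup.
From mathcomp Require Import zify.
Set Implicit Arguments. Unset Strict Implicit. Unset Printing Implicit Defensive.

Definition incr k n (g : 'I_k -> 'I_n) := forall a b : 'I_k, a < b -> g a < g b.
Definition iseq n k (g : 'I_k -> 'I_n) : seq nat :=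
  0 :: [seq (g a).+1 | a <- enum 'I_k] ++ [:: n.+1].
Definition gapc n k (S : {set 'I_k.+1}) (g : 'I_k -> 'I_n) :=
  forall x, x \in S -> nth 0 (iseq g) x.+1 = (nth 0 (iseq g) x).+1.

Lemma incr_lt k n (g : 'I_k -> 'I_n) : incr g -> forall a b, (g a < g b) = (a < b).
Proof.
move=> Hg a b; case: (ltnP a b) => H; first by rewrite Hg.
apply/negbTE; rewrite -leqNgt.
rewrite leq_eqVlt in H; case/orP: H => [/eqP H1|H1]; last exact: ltnW (Hg _ _ H1).
by rewrite (val_inj H1).
Qed.

Lemma sorted_iseq_mid n k (h : 'I_k -> 'I_n) : incr h ->
  sorted leq [seq (h b).+1 | b <- enum 'I_k].
Proof.
move=> Hh.
apply: (@homo_sorted _ _ _ (fun a b : 'I_k => a < b)).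
  by move=> x y /Hh; rewrite ltnS; apply: ltnW.
have := iota_ltn_sorted 0 k; rewrite -val_enum_ord sorted_map.
by [].
Qed.

Lemma sort_mid n k (h : 'I_k -> 'I_n) (s : 'S_k) : incr h ->
  sort leq [seq (h (s a)).+1 | a <- enum 'I_k] = [seq (h b).+1 | b <- enum 'I_k].
Proof.
move=> Hh; apply: (sorted_eq leq_trans anti_leq).
- by apply: sort_sorted => x y; apply: leq_total.
- exact: sorted_iseq_mid.
-
rewrite perm_sort.
have -> : [seq (h (s a)).+1 | a <- enum 'I_k] = [seq (h b).+1 | b <- map s (enum 'I_k)].
  by rewrite -[RHS]map_comp.
apply: perm_map; apply: uniq_perm; rewrite ?enum_uniq //.
  by rewrite map_inj_uniq ?enum_uniq //; apply: perm_inj.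
move=> x; rewrite mem_enum; apply/mapP; exists (s^-1 x)%g; rewrite ?mem_enum //.
by rewrite permKV.
Qed.

Lemma val_seq_iseq n k (pi : 'S_n) (f : {ffun 'I_k -> 'I_n}) (sg : 'S_k) (h : 'I_k -> 'I_n) :
  incr h -> (forall a, pi (f a) = h (sg a)) -> val_seq pi f = iseq h.
Proof.
move=> Hh Hf; rewrite /val_seq /iseq; congr (_ :: _ ++ _).
rewrite -(sort_mid sg Hh); congr sort; apply: eq_map => a; by rewrite Hf.
Qed.

Lemma contains_char n (pi : 'S_n) p : contains pi p <->
  exists g h : 'I_(bv_k p) -> 'I_n, [/\ incr g, incr h,
    (forall a, pi (g a) = h (bv_sigma p a)), gapc (bv_X p) g & gapc (bv_Y p) h].
Proof.
case: p => k sg X Y; rewrite /contains; split.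
- case/existsP => f /and4P [Hinc Hord HX HY].
  have Hord' : forall a b, (pi (f a) < pi (f b)) = (sg a < sg b).
    by move=> a b; move/forallP: Hord => /(_ a) /forallP /(_ b) /eqP.
  have Hh : incr (fun b => pi (f (sg^-1 b)%g)).
    by move=> a b ab /=; rewrite Hord' !permKV.
  exists (fun a => f a), (fun b => pi (f (sg^-1 b)%g)); split => //.
  + move=> a b ab; by move/forallP: Hinc => /(_ a) /forallP /(_ b) /implyP; apply.
  + by move=> a /=; move: (permK sg a) => ->.
  + by move=> x Hx; move/forallP: HX => /(_ x); rewrite Hx => /eqP.
  + move=> x Hx; move/forallP: HY => /(_ x); rewrite Hx => /eqP.
    have E : val_seq pi f = iseq (fun b => pi (f (sg^-1 b)%g)).
      by apply: (@val_seq_iseq _ _ _ _ sg _ Hh) => a /=; move: (permK sg a) => ->.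
    by rewrite E.
- case=> g [h [Hg Hh Hgh HX HY]]; apply/existsP; exists [ffun a => g a].
  have Hidx : idx_seq [ffun a => g a] = iseq g.
    rewrite /idx_seq /iseq; congr (_ :: _ ++ _); apply: eq_map => a; by rewrite ffunE.
  apply/and4P; split.
  + apply/forallP => a; apply/forallP => b; apply/implyP => ab; rewrite !ffunE; exact: Hg.
  + apply/forallP => a; apply/forallP => b; by rewrite !ffunE !Hgh (incr_lt Hh).
  + apply/forallP => x; apply/implyP => Hx; apply/eqP; rewrite Hidx; exact: HX.
  + apply/forallP => x; apply/implyP => Hx; apply/eqP.
    rewrite (@val_seq_iseq _ _ _ _ sg h Hh); first exact: HY.
    by move=> a; rewrite ffunE.
Qed.

Lemma contains_inv n (pi : 'S_n) p : contains pi p -> contains pi^-1 (pat_inv p).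
Proof.
case: p => k sg X Y.
case/contains_char => /= g [h [Hg Hh Hgh HX HY]].
apply/contains_char => /=; exists h, g; split => // a.
have := Hgh (sg^-1 a)%g; move: (permKV sg a) => -> <-.
by move: (permK pi (g (sg^-1 a)%g)) => ->.
Qed.

Lemma pat_invK p : pat_inv (pat_inv p) = p.
Proof. by case: p => k sg X Y; rewrite /pat_inv /= invgK. Qed.

Lemma contains_invE n (pi : 'S_n) p : contains pi^-1 (pat_inv p) = contains pi p.
Proof.
apply/idP/idP; last exact: contains_inv.
by move/contains_inv; rewrite invgK pat_invK.
Qed.

Lemma avoid_inv p n : avoid_count (pat_inv p) n = avoid_count p n.
Proof.
rewrite /avoid_count.
transitivity #|(@invg _) @^-1: [set pi : 'S_n | ~~ contains pi p]|;
  last exact: card_preimset (@invg_inj _).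
apply: eq_card => pi; rewrite !inE; congr negb.
by rewrite -[in LHS](invgK pi) contains_invE.
Qed.

Lemma rev_permE k (x : 'I_k) : rev_perm k x = rev_ord x.
Proof. by rewrite /rev_perm permE. Qed.

Lemma rev_permK k : (rev_perm k * rev_perm k = 1)%g.
Proof. by apply/permP => x; rewrite permM !rev_permE rev_ordK perm1. Qed.

Lemma rev_permV k : ((rev_perm k)^-1 = rev_perm k)%g.
Proof. by rewrite -[LHS]mulg1 -(rev_permK k) mulgA mulVg mul1g. Qed.

Lemma rev_enum k : rev (enum 'I_k) = map (@rev_ord k) (enum 'I_k).
Proof.
apply: (inj_map val_inj); rewrite map_rev val_enum_ord.
have -> : [seq val i | i <- map (@rev_ord k) (enum 'I_k)] =
          [seq k - i.+1 | i <- map val (enum 'I_k)].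
  by rewrite -!map_comp; apply: eq_map => i.
rewrite val_enum_ord.
apply: (@eq_from_nth _ 0); first by rewrite size_rev size_map.
move=> i; rewrite size_rev size_iota => Hi.
rewrite nth_rev ?size_iota // (nth_map 0) ?size_iota // !nth_iota //; lia.
Qed.

Lemma mapmap (A B C : Type) (f : B -> C) (g : A -> B) s :
  map f (map g s) = map (fun x => f (g x)) s.
Proof. by elim: s => //= x s ->. Qed.

Lemma iseq_bound n k (g : 'I_k -> 'I_n) i : nth 0 (iseq g) i <= n.+1.
Proof.
case: (ltnP i (size (iseq g))) => Hi; last by rewrite nth_default.
have : nth 0 (iseq g) i \in iseq g by apply: mem_nth.
rewrite /iseq in_cons mem_cat inE; case/or3P => [/eqP -> //| /mapP [a _ ->]| /eqP -> //].
by have := ltn_ord (g a); lia.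
Qed.

Lemma size_iseq n k (g : 'I_k -> 'I_n) : size (iseq g) = k.+2.
Proof. by rewrite /iseq /= size_cat size_map size_enum_ord addn1. Qed.

Lemma iseq_rev n k (g : 'I_k -> 'I_n) :
  iseq (fun a => rev_ord (g (rev_ord a))) = map (fun v => n.+1 - v) (rev (iseq g)).
Proof.
rewrite /iseq.
have E : rev [seq (g a).+1 | a <- enum 'I_k] = [seq (g (rev_ord a)).+1 | a <- enum 'I_k].
  by rewrite -map_rev rev_enum mapmap.
rewrite rev_cons rev_cat E map_rcons map_cat mapmap subn0 -cats1.
have -> : [seq n.+1 - v | v <- rev [:: n.+1]] = [:: 0] by rewrite /= subnn.
congr (_ :: _ ++ _); apply: eq_map => a.
by have := ltn_ord (g (rev_ord a)); rewrite /=; lia.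
Qed.

Lemma gap_rev (s : seq nat) m N x : size s = m.+2 -> (forall i, nth 0 s i <= N) ->
  x <= m -> nth 0 s x.+1 = (nth 0 s x).+1 ->
  nth 0 (map (fun v => N - v) (rev s)) (m - x).+1 =
  (nth 0 (map (fun v => N - v) (rev s)) (m - x)).+1.
Proof.
move=> Hs Hb Hx Hn.
rewrite !(nth_map 0) ?size_rev ?Hs; try lia.
rewrite !nth_rev ?Hs; try lia.
have -> : m.+2 - (m - x).+2 = x by lia.
have -> : m.+2 - (m - x).+1 = x.+1 by lia.
have := Hb x.+1; rewrite Hn; lia.
Qed.

Lemma gapc_rev n k (X : {set 'I_k.+1}) (g : 'I_k -> 'I_n) : gapc X g ->
  gapc [set rev_ord x | x in X] (fun a => rev_ord (g (rev_ord a))).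
Proof.
move=> HX y /imsetP [x Hx ->].
rewrite iseq_rev /=.
have -> : k.+1 - x.+1 = k - x by [].
have := @gap_rev (iseq g) k n.+1 x (size_iseq g) (@iseq_bound _ _ g).
rewrite -ltnS ltn_ord => /(_ isT (HX x Hx)).
by [].
Qed.

Lemma contains_rev n (pi : 'S_n) p : contains pi p -> contains (rev_perm n * pi)%g (pat_rev p).
Proof.
case: p => k sg X Y.
case/contains_char => /= g [h [Hg Hh Hgh HX HY]].
apply/contains_char => /=; exists (fun a => rev_ord (g (rev_ord a))), h; split => //.
- move=> a b ab /=.
  have : rev_ord b < rev_ord a by rewrite /=; have := ltn_ord b; lia.
  move/Hg; rewrite /=; have := ltn_ord (g (rev_ord a)); have := ltn_ord (g (rev_ord b)); lia.
- by move=> a; rewrite !permM !rev_permE rev_ordK Hgh.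
- exact: gapc_rev.
Qed.

Lemma imset_rev_ordK k (X : {set 'I_k}) : [set rev_ord x | x in [set rev_ord x | x in X]] = X.
Proof.
apply/setP => y; apply/imsetP/idP.
- by case=> z /imsetP [x Hx ->] ->; rewrite rev_ordK.
- move=> Hy; exists (rev_ord y); last by rewrite rev_ordK.
  by apply/imsetP; exists y.
Qed.

Lemma pat_revK p : pat_rev (pat_rev p) = p.
Proof.
case: p => k sg X Y; rewrite /pat_rev /= imset_rev_ordK mulgA rev_permK mul1g.
by [].
Qed.

Lemma contains_revE n (pi : 'S_n) p : contains (rev_perm n * pi)%g (pat_rev p) = contains pi p.
Proof.
apply/idP/idP; last exact: contains_rev.
by move/contains_rev; rewrite mulgA rev_permK mul1g pat_revK.
Qed.

Lemma avoid_rev p n : avoid_count (pat_rev p) n = avoid_count p n.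
Proof.
rewrite /avoid_count.
transitivity #|(fun pi => rev_perm n * pi)%g @^-1: [set pi : 'S_n | ~~ contains pi p]|;
  last exact: card_preimset (@mulgI _ _).
apply: eq_card => pi; rewrite !inE; congr negb.
by rewrite -[in LHS](mulKg (rev_perm n) pi) rev_permV contains_revE.
Qed.

Lemma pat_comp_eq p : pat_comp p = pat_inv (pat_rev (pat_inv p)).
Proof.
case: p => k sg X Y; rewrite /pat_comp /pat_inv /pat_rev /=.
by rewrite invMg invgK rev_permV.
Qed.

Lemma avoid_sym p0 q n : in_sym_class p0 q -> avoid_count q n = avoid_count p0 n.
Proof.
elim=> [//|q' _ IH|q' _ IH|q' _ IH].
- by rewrite avoid_inv.
- by rewrite avoid_rev.
- by rewrite pat_comp_eq avoid_inv avoid_rev avoid_inv.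
Qed.

Definition o0 : 'I_3 := @Ordinal 3 0 isT.
Definition o1 : 'I_3 := @Ordinal 3 1 isT.
Definition o2 : 'I_3 := @Ordinal 3 2 isT.

Lemma I3_cases (a : 'I_3) : a = o0 \/ a = o1 \/ a = o2.
Proof.
case: a => [[|[|[|x]]] Ha].
- by left; apply: val_inj.
- by right; left; apply: val_inj.
- by right; right; apply: val_inj.
- by [].
Qed.

Definition tri n (a b c : 'I_n) : 'I_3 -> 'I_n :=
  fun i => match val i with 0 => a | 1 => b | _ => c end.

Lemma incr_tri n (a b c : 'I_n) : a < b -> b < c -> incr (tri a b c).
Proof.
move=> ab bc i j; rewrite /tri.
case: i => [[|[|[|x]]] Hi] //; case: j => [[|[|[|y]]] Hj] //=; lia.
Qed.

Lemma nth_iseq_mid n k (g : 'I_k -> 'I_n) (i : 'I_k) j :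
  j = i.+1 -> nth 0 (iseq g) j = (g i).+1.
Proof.
move=> ->; change (nth 0 ([seq (g a).+1 | a <- enum 'I_k] ++ [:: n.+1]) i = (g i).+1).
by rewrite nth_cat size_map size_enum_ord ltn_ord (nth_map i) ?size_enum_ord // nth_ord_enum.
Qed.

Lemma gapc_set0 n (g : 'I_3 -> 'I_n) : gapc set0_4 g <-> val (g o0) = 0.
Proof.
rewrite /gapc /set0_4; split.
- move=> /(_ (inord 0)); rewrite inE eqxx => /(_ isT).
  rewrite inordK // (@nth_iseq_mid _ _ g o0) //=; by case.
- move=> H x; rewrite inE => /eqP ->; rewrite inordK // (@nth_iseq_mid _ _ g o0) //.
  by rewrite H.
Qed.

Lemma gapc_set02 n (g : 'I_3 -> 'I_n) :
  gapc set02_4 g <-> val (g o0) = 0 /\ val (g o2) = (g o1).+1.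
Proof.
rewrite /gapc /set02_4; split.
- move=> H; split.
  + move: (H (inord 0)); rewrite !inE eqxx => /(_ isT).
    rewrite inordK // (@nth_iseq_mid _ _ g o0) //=; by case.
  + move: (H (inord 2)); rewrite !inE eqxx orbT => /(_ isT).
    rewrite inordK // (@nth_iseq_mid _ _ g o2) // (@nth_iseq_mid _ _ g o1) //.
    by case.
- move=> [H0 H2] x; rewrite !inE => /orP [] /eqP ->; rewrite inordK //.
  + by rewrite (@nth_iseq_mid _ _ g o0) // H0.
  + by rewrite (@nth_iseq_mid _ _ g o2) // (@nth_iseq_mid _ _ g o1) // H2.
Qed.

Lemma perm132E : perm132 o0 = o0 /\ perm132 o1 = o2 /\ perm132 o2 = o1.
Proof.
have E1 : (inord 1 : 'I_3) = o1 by apply: val_inj; rewrite /= inordK.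
have E2 : (inord 2 : 'I_3) = o2 by apply: val_inj; rewrite /= inordK.
by rewrite /perm132 E1 E2 tpermL tpermR tpermD.
Qed.

Lemma perm123E a : perm123 a = a.
Proof. by rewrite /perm123 perm1. Qed.

Definition cfun m (i : 'I_m.+1) : 'I_m.+1 := if val i == 0 then ord0 else inord (m.+1 - i).

Lemma cfunE m (i : 'I_m.+1) : val (cfun i) = if val i == 0 then 0 else m.+1 - i.
Proof.
rewrite /cfun; case: eqP => //= H; rewrite inordK //; have := ltn_ord i; lia.
Qed.

Lemma cfun_inj m : injective (@cfun m).
Proof.
move=> i j /(congr1 val); rewrite !cfunE => E; apply: val_inj.
have := ltn_ord i; have := ltn_ord j.
move: E; case: eqP; case: eqP => /=; lia.
Qed.

Definition cperm m : 'S_m.+1 := perm (@cfun_inj m).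

Lemma cpermE m (i : 'I_m.+1) : val (cperm m i) = if val i == 0 then 0 else m.+1 - i.
Proof. by rewrite /cperm permE cfunE. Qed.

Lemma inord0 m : (inord 0 : 'I_m.+1) = ord0.
Proof. by apply: val_inj; rewrite /= inordK. Qed.

Lemma dec_perm m (h : 'S_m.+1) : h ord0 = ord0 ->
  (forall i, 0 < i -> i < m -> h (inord i.+1) < h (inord i)) -> h = cperm m.
Proof.
move=> H0 Hd.
have Hne : forall i, 0 < i <= m -> 0 < h (inord i).
  move=> i Hi; rewrite lt0n; apply/negP => /eqP E.
  have : h (inord i) = h ord0 by apply: val_inj => /=; rewrite H0; exact: E.
  move/perm_inj/(congr1 val) => /=; rewrite inordK; lia.
have Hlow : forall d, d < m -> d.+1 <= h (inord (m - d)).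
  elim=> [|d IH] Hdm; first by rewrite subn0; apply: Hne; lia.
  have := Hd (m - d.+1); have -> : (m - d.+1).+1 = m - d by lia.
  move=> /(_ ltac:(lia) ltac:(lia)); have := IH ltac:(lia); lia.
have Hup : forall i, 0 < i -> i <= m -> h (inord i) <= m.+1 - i.
  elim=> [//|i IH] _ Him; case: (posnP i) => [->|Hi].
    by have := ltn_ord (h (inord 1)); lia.
  have := Hd i Hi Him; have := IH Hi ltac:(lia); lia.
apply/permP => x; apply: val_inj; rewrite cpermE.
case: eqP => Hx.
  have -> : x = ord0 by apply: val_inj.
  by rewrite H0.
move: Hx; case: x => y Hy /= Hx.
have -> : Ordinal Hy = inord y by apply: val_inj; rewrite /= inordK.
have := Hup y ltac:(lia) ltac:(lia); have := Hlow (m - y) ltac:(lia).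
have -> : m - (m - y) = y by lia.
lia.
Qed.

Lemma inc_perm m (h : 'S_m.+1) : h ord0 = ord0 ->
  (forall i, 0 < i -> i < m -> h (inord i) < h (inord i.+1)) -> h = 1%g.
Proof.
move=> H0 Hd.
have Hne : forall i, 0 < i <= m -> 0 < h (inord i).
  move=> i Hi; rewrite lt0n; apply/negP => /eqP E.
  have : h (inord i) = h ord0 by apply: val_inj => /=; rewrite H0; exact: E.
  move/perm_inj/(congr1 val) => /=; rewrite inordK; lia.
have Hlow : forall i, i <= m -> i <= h (inord i).
  elim=> [//|i IH] Him; case: (posnP i) => [->|Hi].
    by apply: Hne; lia.
  have := Hd i Hi Him; have := IH ltac:(lia); lia.
have Hup : forall d, d <= m -> h (inord (m - d)) <= m - d.
  elim=> [|d IH] Hdm; first by rewrite subn0; have := ltn_ord (h (inord m)); lia.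
  case: (posnP (m - d.+1)) => [E|Hi].
    by rewrite E inord0 H0.
  have := Hd (m - d.+1) Hi ltac:(lia); have -> : (m - d.+1).+1 = m - d by lia.
  have := IH ltac:(lia); lia.
apply/permP => x; apply: val_inj; rewrite perm1.
case: x => y Hy /=.
have -> : Ordinal Hy = inord y by apply: val_inj; rewrite /= inordK.
have := Hlow y ltac:(lia); have := Hup (m - y) ltac:(lia).
have -> : m - (m - y) = y by lia.
lia.
Qed.

Lemma card_fix0 m : #|[set pi : 'S_m.+1 | pi ord0 != ord0]| = m.+1`! - m`!.
Proof.
have H := cardsC [set pi : 'S_m.+1 | pi ord0 == ord0].
rewrite card_Sn in H.
have E1 : #|[set pi : 'S_m.+1 | pi ord0 == ord0]| = m`!.
  rewrite (_ : m`! = #|[set~ (ord0 : 'I_m.+1)]|`!); last by rewrite cardsC1 card_ord.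
  rewrite -card_perm; apply: eq_card => pi; rewrite inE.
  apply/eqP/subsetP.
  - move=> E x; rewrite !inE => Hx; apply/eqP => Ex; move: Hx; by rewrite Ex E eqxx.
  - move=> Hs; apply/eqP; apply/negPn/negP => Hne.
    by have := Hs ord0 Hne; rewrite !inE eqxx.
have E2 : ~: [set pi : 'S_m.+1 | pi ord0 == ord0] = [set pi : 'S_m.+1 | pi ord0 != ord0].
  by apply/setP => pi; rewrite !inE.
rewrite -E2; lia.
Qed.

Lemma count_gen m (Q : 'S_m.+1 -> bool) (c : 'S_m.+1) :
  (forall pi : 'S_m.+1, pi ord0 != ord0 -> Q pi) -> Q c -> c ord0 = ord0 ->
  (forall pi : 'S_m.+1, Q pi -> pi ord0 = ord0 -> pi = c) ->
  #|[set pi | Q pi]| = m.+1`! - m`! + 1.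
Proof.
move=> H1 H2 H3 H4.
have -> : [set pi | Q pi] = c |: [set pi : 'S_m.+1 | pi ord0 != ord0].
  apply/setP => pi; rewrite !inE; apply/idP/idP.
  - move=> Hq; case: (boolP (pi ord0 == ord0)) => [/eqP E|Hn]; last by apply/orP; right.
    by rewrite (H4 _ Hq E) eqxx.
  - by case/orP => [/eqP ->|]; [|apply: H1].
by rewrite cardsU1 card_fix0 inE H3 eqxx /= addnC.
Qed.

Lemma fix0 m (pi : 'S_m.+1) (sg : 'S_3) (Y : {set 'I_4}) : sg o0 = o0 ->
  (forall h : 'I_3 -> 'I_m.+1, gapc Y h -> val (h o0) = 0) ->
  contains pi (@BVPat 3 sg set0_4 Y) -> pi ord0 = ord0.
Proof.
move=> Hs HYc; case/contains_char => /= g [h [Hg Hh Hgh HX HY]].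
have g0 : g o0 = ord0 by apply: val_inj; rewrite ((gapc_set0 g).1 HX).
have h0 : h o0 = ord0 by apply: val_inj; rewrite (HYc h HY).
by have := Hgh o0; rewrite Hs g0 h0.
Qed.

Lemma pos_img m (f : 'S_m.+1) : f ord0 = ord0 -> forall x : 'I_m.+1, 0 < x -> 0 < f x.
Proof.
move=> H0 x Hx; rewrite lt0n; apply/negP => /eqP E.
have : f x = f ord0 by apply: val_inj => /=; rewrite H0; exact: E.
by move/perm_inj => Ex; move: Hx; rewrite Ex.
Qed.

Lemma distinct_consec m (f : 'S_m.+1) i : i < m -> f (inord i) != f (inord i.+1) :> nat.
Proof.
move=> Hi; apply/negP => /eqP E.
have : f (inord i) = f (inord i.+1) by apply: val_inj.
move/perm_inj/(congr1 val); rewrite /= !inordK; lia.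
Qed.

Lemma lt_swap m (f : 'S_m.+1) i : i < m ->
  ~ (f (inord i) < f (inord i.+1)) -> f (inord i.+1) < f (inord i).
Proof. move=> Hi H; have := distinct_consec f Hi; move/negP: H; lia. Qed.

Lemma lt_swap' m (f : 'S_m.+1) i : i < m ->
  ~ (f (inord i.+1) < f (inord i)) -> f (inord i) < f (inord i.+1).
Proof. move=> Hi H; have := distinct_consec f Hi; move/negP: H; lia. Qed.

Lemma inord_pos m i : 0 < i -> i <= m -> 0 < nat_of_ord (inord i : 'I_m.+1).
Proof. by move=> H1 H2; rewrite inordK. Qed.

Lemma inord_lt m i : i < m -> nat_of_ord (inord i : 'I_m.+1) < nat_of_ord (inord i.+1 : 'I_m.+1).
Proof. by move=> H; rewrite !inordK //; lia. Qed.

Lemma gY0 n (h : 'I_3 -> 'I_n) : gapc set0_4 h -> val (h o0) = 0.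
Proof. by move/gapc_set0. Qed.

Lemma gY02 n (h : 'I_3 -> 'I_n) : gapc set02_4 h -> val (h o0) = 0.
Proof. by case/gapc_set02. Qed.

Lemma cperm0 m : cperm m ord0 = ord0.
Proof. by apply: val_inj; rewrite cpermE. Qed.

Lemma cperm_dec m (x y : 'I_m.+1) : 0 < x -> x < y -> cperm m y < cperm m x.
Proof.
move=> Hx Hxy; rewrite !cpermE.
move: Hx Hxy; case: x => x Hx' /=; case: y => y Hy' /= Hx Hxy.
case: eqP => [E|_]; first lia.
case: eqP => [E|_]; first lia.
lia.
Qed.

Lemma count_p1 m : avoid_count p1 m.+1 = m.+1`! - m`! + 1.
Proof.
apply: (@count_gen m _ (cperm m)).
- move=> pi Hpi; apply/negP => /(@fix0 m pi _ _ (perm123E _) (@gY0 _)) E.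
  by rewrite E eqxx in Hpi.
- apply/negP; case/contains_char => /= g [h [Hg Hh Hgh HX HY]].
  have g0 := gY0 HX.
  have H1 := Hgh o1; have H2 := Hgh o2; rewrite !perm123E in H1 H2.
  have := Hh o1 o2 isT; rewrite -H1 -H2 => Hlt.
  have := Hg o0 o1 isT; have := Hg o1 o2 isT => L12 L01.
  have := @cperm_dec m (g o1) (g o2) ltac:(lia) L12; lia.
- exact: cperm0.
- move=> pi Hpi H0; apply: dec_perm => // i i0 im.
  apply: lt_swap => // Hlt; move/negP: Hpi; apply.
  apply/contains_char => /=.
  exists (tri ord0 (inord i) (inord i.+1)), (tri ord0 (pi (inord i)) (pi (inord i.+1))).
  split.
  + apply: incr_tri; rewrite /= ?inordK; lia.
  + apply: incr_tri => //; apply: pos_img => //; apply: inord_pos; lia.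
  + by move=> a; case: (I3_cases a) => [->|[->|->]]; rewrite perm123E.
  + by apply/gapc_set0.
  + by apply/gapc_set0.
Qed.

Lemma count_p3 m : avoid_count p3 m.+1 = m.+1`! - m`! + 1.
Proof.
have [s0 [s1 s2]] := perm132E.
apply: (@count_gen m _ 1%g).
- move=> pi Hpi; apply/negP => /(@fix0 m pi _ _ s0 (@gY0 _)) E.
  by rewrite E eqxx in Hpi.
- apply/negP; case/contains_char => /= g [h [Hg Hh Hgh HX HY]].
  have H1 := Hgh o1; have H2 := Hgh o2; rewrite s1 s2 !perm1 in H1 H2.
  have := Hh o1 o2 isT; rewrite -H1 -H2 => Hlt.
  have := Hg o1 o2 isT; lia.
- by rewrite perm1.
- move=> pi Hpi H0; apply: inc_perm => // i i0 im.
  apply: lt_swap' => // Hlt; move/negP: Hpi; apply.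
  apply/contains_char => /=.
  exists (tri ord0 (inord i) (inord i.+1)), (tri ord0 (pi (inord i.+1)) (pi (inord i))).
  split.
  + apply: incr_tri; rewrite /= ?inordK; lia.
  + apply: incr_tri => //; apply: pos_img => //; rewrite /= inordK; lia.
  + by move=> a; case: (I3_cases a) => [->|[->|->]]; rewrite ?s0 ?s1 ?s2.
  + by apply/gapc_set0.
  + by apply/gapc_set0.
Qed.

Lemma count_p4 m : avoid_count p4 m.+1 = m.+1`! - m`! + 1.
Proof.
have [s0 [s1 s2]] := perm132E.
apply: (@count_gen m _ 1%g).
- move=> pi Hpi; apply/negP => /(@fix0 m pi _ _ s0 (@gY02 _)) E.
  by rewrite E eqxx in Hpi.
- apply/negP; case/contains_char => /= g [h [Hg Hh Hgh HX HY]].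
  have H1 := Hgh o1; have H2 := Hgh o2; rewrite s1 s2 !perm1 in H1 H2.
  have := Hh o1 o2 isT; rewrite -H1 -H2 => Hlt.
  have := Hg o1 o2 isT; lia.
- by rewrite perm1.
- move=> pi Hpi H0.
  have H0' : (pi^-1)%g ord0 = ord0 by rewrite -{1}H0 permK.
  suff : (pi^-1 = 1)%g by move=> E; rewrite -[pi]invgK E invg1.
  apply: inc_perm => // i i0 im.
  apply: lt_swap' => // Hlt; move/negP: Hpi; apply.
  apply/contains_char => /=.
  exists (tri ord0 ((pi^-1)%g (inord i.+1)) ((pi^-1)%g (inord i))), (tri ord0 (inord i) (inord i.+1)).
  split.
  + apply: incr_tri => //; apply: pos_img => //; rewrite /= inordK; lia.
  + apply: incr_tri; rewrite /= ?inordK; lia.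
  + by move=> a; case: (I3_cases a) => [->|[->|->]]; rewrite ?s0 ?s1 ?s2 /= ?permKV.
  + by apply/gapc_set0.
  + by apply/gapc_set02; rewrite /= !inordK //; lia.
Qed.

Lemma count_p2 m : avoid_count p2 m.+1 = m.+1`! - m`! + 1.
Proof.
apply: (@count_gen m _ (cperm m)^-1%g).
- move=> pi Hpi; apply/negP => /(@fix0 m pi _ _ (perm123E _) (@gY02 _)) E.
  by rewrite E eqxx in Hpi.
- apply/negP; case/contains_char => /= g [h [Hg Hh Hgh HX HY]].
  have h0 := gY02 HY.
  have H1 := Hgh o1; have H2 := Hgh o2; rewrite !perm123E in H1 H2.
  have E1 : g o1 = cperm m (h o1) by rewrite -H1 permKV.
  have E2 : g o2 = cperm m (h o2) by rewrite -H2 permKV.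
  have := Hg o1 o2 isT; rewrite E1 E2.
  have := Hh o0 o1 isT; have := Hh o1 o2 isT => L12 L01.
  have := @cperm_dec m (h o1) (h o2) ltac:(lia) L12; lia.
- by rewrite -{1}(cperm0 m) permK.
- move=> pi Hpi H0.
  have H0' : (pi^-1)%g ord0 = ord0 by rewrite -{1}H0 permK.
  suff : (pi^-1 = cperm m)%g by move=> <-; rewrite invgK.
  apply: dec_perm => // i i0 im.
  apply: lt_swap => // Hlt; move/negP: Hpi; apply.
  apply/contains_char => /=.
  exists (tri ord0 ((pi^-1)%g (inord i)) ((pi^-1)%g (inord i.+1))), (tri ord0 (inord i) (inord i.+1)).
  split.
  + apply: incr_tri => //; apply: pos_img => //; rewrite /= inordK; lia.
  + apply: incr_tri; rewrite /= ?inordK; lia.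
  + by move=> a; case: (I3_cases a) => [->|[->|->]]; rewrite perm123E /= ?permKV.
  + by apply/gapc_set0.
  + by apply/gapc_set02; rewrite /= !inordK //; lia.
Qed.

Theorem mainTheorem14 (p : bvpat) :
  (in_sym_class p1 p \/ in_sym_class p2 p \/ in_sym_class p3 p \/ in_sym_class p4 p) ->
  forall n : nat, 1 <= n -> avoid_count p n = n`! - n.-1`! + 1.
Proof.
move=> H [//|m] _ /=.
case: H => [H|[H|[H|H]]]; rewrite (avoid_sym _ H).
- exact: count_p1.
- exact: count_p2.
- exact: count_p3.
- exact: count_p4.
Qed.
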